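(* Let $r$, $s$, $c$ and $a_n$ be any integers and let $n$ be a positive integer, and assume $V_r\neq0$. Then \[ \sum_{a_{n-1}=c}^{a_n}\sum_{a_{n-2}=c}^{a_{n-1}}\cdots\sum_{a_0=c}^{a_1}\frac{W_{ra_0+s}}{V_r^{a_0}} =(-1)^n\frac{W_{r(a_n+2n)+s}}{q^{rn}V_r^{a_n}}-\frac{1}{V_r^{c-1}}\sum_{j=0}^{n-1}(-1)^{n-j}\frac{W_{r(2n-2j+c-1)+s}}{q^{r(n-j)}}\binom{a_n+j-c}{j}. \]
   Context: Let $a,b,p,q$ be complex numbers with $p\neq0$, $q\neq0$. The Horadam sequence $W_j=W_j(a,b;p,q)$ is defined by $W_0=a$, $W_1=b$, $W_j=pW_{j-1}-qW_{j-2}$ for $j\ge2$, and extended to negative indices by $W_{-m}=(pW_{-m+1}-W_{-m+2})/q$, so the recurrence holds for all integers. $V_j=W_j(2,p;p,q)$ is the Lucas sequence of the second kind. For integers $c,m$ and a function $f$ on the integers, $\sum_{k=c}^m f(k)$ denotes the usual sum if $m\ge c$, equals $0$ if $m=c-1$, and equals $-\sum_{k=m+1}^{c-1}f(k)$ if $m\le c-2$. The nested sum $\sum_{a_{n-1}=c}^{a_n}\cdots\sum_{a_0=c}^{a_1}g(a_0)$ is the iterated sum with $n$ summation signs: innermost over $a_0$ from $c$ to $a_1$, then $a_1$ from $c$ to $a_2$, ..., outermost $a_{n-1}$ from $c$ to $a_n$. For an integer $j\ge0$ and any number $y$, $\binom{y}{j}=y(y-1)\cdots(y-j+1)/j!$.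 *)

(* Defs.v *)
From HB Require Import structures.
From mathcomp Require Import all_boot all_order all_algebra.
From mathcomp Require Import complex.
From mathcomp Require Import Rstruct reals.

Set Implicit Arguments. Unset Strict Implicit. Unset Printing Implicit Defensive.
Import Order.TTheory GRing.Theory Num.Theory.
Local Open Scope ring_scope.

Notation CC := (complex Rdefinitions.R).

Section Horadam.
Variables (a b p q : CC).

(* (W_n, W_{n+1}) for n >= 0 *)
Fixpoint Wpos (n : nat) : CC * CC :=
  match n with
  | O => (a, b)
  | S m => let: (x, y) := Wpos m in (y, p * y - q * x)
  end.

(* (W_{-m}, W_{-m+1}) for m >= 0, using W_{-m} = (p W_{-m+1} - W_{-m+2})/q *)
Fixpoint Wneg (m : nat) : CC * CC :=
  match m with
  | O => (a, b)
  | S k => let: (x, y) := Wneg k in ((p * x - y) / q, x)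
  end.

Definition W (j : int) : CC :=
  match j with
  | Posz n => (Wpos n).1
  | Negz n => (Wneg n.+1).1
  end.
End Horadam.

Definition V (p q : CC) (j : int) : CC := W 2 p p q j.

(* Generalized sum  sum_{k=c}^{m} f k  with the paper's convention:
   usual sum if m >= c, 0 if m = c-1, - sum_{k=m+1}^{c-1} f k if m <= c-2. *)
Definition gsum (f : int -> CC) (c m : int) : CC :=
  if c <= m + 1 then \sum_(i < absz (m + 1 - c)%R) f (c + i%:Z)
  else - \sum_(i < absz (c - 1 - m)%R) f (m + 1 + i%:Z).

(* Iterated sum with n summation signs, outermost variable x = a_n:
   nested g c n x = sum_{a_{n-1}=c}^{x} ... sum_{a_0=c}^{a_1} g a_0. *)
Fixpoint nested (g : int -> CC) (c : int) (n : nat) (x : int) : CC :=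
  match n with
  | O => g x
  | S k => gsum (nested g c k) c x
  end.

Definition gbinom (y : CC) (j : nat) : CC :=
  (\prod_(i < j) (y - i%:R)) / (j`!)%:R.

(* Main.v *)
Require Import Defs.
From HB Require Import structures.
From mathcomp Require Import all_boot all_order all_algebra.
From mathcomp Require Import complex Rstruct reals.
From mathcomp Require Import ring lra.
Import Order.TTheory GRing.Theory Num.Theory.
Local Open Scope ring_scope.

Section S.
Variables (a b p q : CC).
Hypothesis hq : q != 0.

Definition isrec (u : int -> CC) := forall j : int, u (j + 2) = p * u (j + 1) - q * u j.

Lemma Wpos1 n : (Wpos a b p q n.+1).1 = (Wpos a b p q n).2.
Proof. by rewrite /=; case: (Wpos a b p q n). Qed.
Lemma Wpos2 n : (Wpos a b p q n.+1).2 = p * (Wpos a b p q n).2 - q * (Wpos a b p q n).1.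
Proof. by rewrite /=; case: (Wpos a b p q n). Qed.
Lemma Wneg1 n : (Wneg a b p q n.+1).1 = (p * (Wneg a b p q n).1 - (Wneg a b p q n).2) / q.
Proof. by rewrite /=; case: (Wneg a b p q n). Qed.
Lemma Wneg2 n : (Wneg a b p q n.+1).2 = (Wneg a b p q n).1.
Proof. by rewrite /=; case: (Wneg a b p q n). Qed.

Lemma WN (m : nat) : W a b p q (- m%:Z) = (Wneg a b p q m).1.
Proof. by case: m => [|m] //; rewrite -NegzE. Qed.

Lemma WN2 (m : nat) : W a b p q (1 - m%:Z) = (Wneg a b p q m).2.
Proof.
case: m => [|m] //; rewrite Wneg2 -WN; congr W.
rewrite -addn1 PoszD; ring.
Qed.

Lemma WP2 (m : nat) : W a b p q (m%:Z + 1) = (Wpos a b p q m).2.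
Proof. by rewrite -PoszD addn1 /W Wpos1. Qed.

Lemma Wrec : isrec (W a b p q).
Proof.
move=> [n|n].
- rewrite -PoszD addn2 -PoszD addn1 /W Wpos1 Wpos2 Wpos1. done.
- rewrite NegzE.
  have e1 : - (n.+1)%:Z + 2 = 1 - n%:Z by rewrite -addn1 PoszD; ring.
  have e2 : - (n.+1)%:Z + 1 = - n%:Z by rewrite -addn1 PoszD; ring.
  rewrite e1 e2 WN WN WN2 Wneg1.
  by field.
Qed.
Lemma rec_uniq u : isrec u -> u 0 = 0 -> u 1 = 0 -> forall j, u j = 0.
Proof.
move=> hu h0 h1.
have P : forall n : nat, u n%:Z = 0 /\ u (n%:Z + 1) = 0.
  elim=> [|n [IH1 IH2]]; first by rewrite add0r.
  split; first by rewrite -addn1 PoszD.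
  by rewrite -addn1 PoszD -addrA (_ : 1 + 1 = 2) // hu IH1 IH2 !mulr0 subr0.
have N : forall n : nat, u (- n%:Z) = 0 /\ u (- n%:Z + 1) = 0.
  elim=> [|n [IH1 IH2]]; first by rewrite oppr0 add0r.
  have e : - n%:Z = - (n.+1)%:Z + 1 by rewrite -addn1 PoszD; ring.
  split; last by rewrite -e.
  have := hu (- (n.+1)%:Z).
  rewrite (_ : - (n.+1)%:Z + 2 = - n%:Z + 1); last by rewrite -addn1 PoszD; ring.
  rewrite -e IH1 IH2 mulr0 sub0r => /esym /eqP; rewrite oppr_eq0 mulf_eq0 (negbTE hq) /=.
  by move/eqP.
move=> [n|n]; first by case: (P n).
by rewrite NegzE; case: (N n.+1).
Qed.

End S.
Section S2.
Variables (a b p q : CC).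
Hypothesis hq : q != 0.
Lemma Vrec : isrec p q (V p q).
Proof. exact: (Wrec 2 p p q hq). Qed.
Let Wrec := Wrec a b p q hq.
Let rec_uniq := rec_uniq p q hq.

Lemma Vid (m r : int) : W a b p q (m + r) + q ^ r * W a b p q (m - r) = V p q r * W a b p q m.
Proof.
pose g := fun r : int => (W a b p q (m + r) + q ^ r * W a b p q (m - r) - V p q r * W a b p q m : CC).
suff : g r = 0 by move/eqP; rewrite subr_eq0 => /eqP.
apply: rec_uniq.
- move=> j; rewrite /g.
  rewrite addrA Wrec Vrec.
  have e2 : q ^ (j + 2) = q ^ (j + 1) * q by rewrite -[X in _ = _ * X]expr1z -expfzDr // -addrA.
  have e1 : q ^ (j + 1) = q ^ j * q by rewrite expfzDr // expr1z.
  have := Wrec (m - j - 2).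
  rewrite (_ : m - j - 2 + 2 = m - j); last by ring.
  rewrite (_ : m - j - 2 + 1 = m - (j + 1)); last by ring.
  rewrite (_ : m - j - 2 = m - (j + 2)); last by ring.
  move=> hW.
  have hW' : q * W a b p q (m - (j + 2)) = p * W a b p q (m - (j + 1)) - W a b p q (m - j).
    by rewrite hW; ring.
  rewrite e2 e1 -mulrA hW' !addrA. ring.
- rewrite /g (_ : m + 0 = m); last by ring.
  by rewrite expr0z /V /=; ring.
- rewrite /g (_ : q ^ 1 = q) ?expr1z // /V /=.
  have := Wrec (m - 1).
  rewrite (_ : m - 1 + 2 = m + 1); last by ring.
  rewrite (_ : m - 1 + 1 = m); last by ring.
  move=> ->. ring.
Qed.
End S2.
Lemma tele_sum (F : int -> CC) (d : int) (N : nat) :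
  \sum_(i < N) (F (d + i%:Z) - F (d + i%:Z - 1)) = F (d + N%:Z - 1) - F (d - 1).
Proof.
elim: N => [|N IH]; first by rewrite big_ord0 addr0 subrr.
rewrite big_ord_recr /= IH intS.
rewrite (_ : d + (1 + N%:Z) - 1 = d + N%:Z); last by ring.
by rewrite addrC addrA subrK addrC.
Qed.

Lemma gsum_tele (h F : int -> CC) c m : (forall k, h k = F k - F (k - 1)) ->
  gsum h c m = F m - F (c - 1).
Proof.
move=> hk; rewrite /gsum; case: ifP => hc.
- under eq_bigr do rewrite hk.
  rewrite tele_sum gez0_abs; last by rewrite subr_ge0.
  by rewrite (_ : c + (m + 1 - c) - 1 = m) //; ring.
- under eq_bigr do rewrite hk.
  rewrite tele_sum gez0_abs; last first.
    by rewrite subr_ge0 lerBrDr; move/negbT: hc; rewrite -ltNge addrC => /ltW.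
  rewrite (_ : m + 1 + (c - 1 - m) - 1 = c - 1); last by ring.
  rewrite (_ : m + 1 - 1 = m); last by ring.
  by rewrite opprB.
Qed.

Lemma gbinom0 y : gbinom y 0 = 1.
Proof. by rewrite /gbinom big_ord0 fact0 divr1. Qed.

Lemma pascal (y : CC) j : gbinom (y + 1) j.+1 - gbinom y j.+1 = gbinom y j.
Proof.
rewrite /gbinom big_ord_recl big_ord_recr /=.
under eq_bigr => i _ do rewrite /bump /= natrD opprD addrA addrK.
rewrite factS natrM.
have h1 : (j.+1%:R : CC) != 0 by rewrite pnatr_eq0.
have h2 : ((j`!)%:R : CC) != 0 by rewrite pnatr_eq0 -lt0n fact_gt0.
move: (\prod_(i < j) _) => P.
rewrite -natr1. field. by rewrite natr1 h1 h2.
Qed.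

Lemma gbinomS0 (k : nat) : gbinom ((k%:Z)%:~R) k.+1 = 0.
Proof.
by rewrite /gbinom big_ord_recr /= subrr mulr0 mul0r.
Qed.

Section Main.
Variables (a b p q : CC) (r s c : int).
Hypothesis hq : q != 0.
Hypothesis hV : V p q r != 0.

Definition Rn (n : nat) (an : int) : CC :=
  (-1) ^+ n * W a b p q (r * (an + 2 * n%:Z) + s) / (q ^ (r * n%:Z) * V p q r ^ an)
  - (V p q r ^ (c - 1))^-1 *
    \sum_(j < n) (-1) ^+ (n - j) * W a b p q (r * (2 * n%:Z - 2 * j%:Z + c - 1) + s)
                 / q ^ (r * (n%:Z - j%:Z)) * gbinom (an + j%:Z - c)%:~R j.

Lemma stepA x : Rn 0 x = W a b p q (r * x + s) / V p q r ^ x.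
Proof.
rewrite /Rn big_ord0 !mulr0 !addr0 subr0 expr0 mul1r.
by rewrite expr0z mul1r.
Qed.

Lemma stepC n : Rn n.+1 (c - 1) = 0.
Proof.
rewrite /Rn big_ord_recl /= big1; last first.
  move=> i _; rewrite /bump /= add1n.
  rewrite (_ : c - 1 + (i.+1)%:Z - c = i%:Z); last by rewrite intS; ring.
  by rewrite gbinomS0 mulr0.
rewrite addr0 subn0 gbinom0.
rewrite (_ : r * (2 * (n.+1)%:Z - 2 * 0%:Z + c - 1) + s = r * (c - 1 + 2 * (n.+1)%:Z) + s); last by ring.
rewrite (_ : r * ((n.+1)%:Z - 0%:Z) = r * (n.+1)%:Z); last by ring.
have h1 := expfz_neq0 (r * (n.+1)%:Z) hq.
have h2 := expfz_neq0 (c - 1) hV.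
by field; rewrite h1 h2.
Qed.

Definition Cf (n j : nat) := (-1) ^+ (n - j) * W a b p q (r * (2 * n%:Z - 2 * j%:Z + c - 1) + s)
                 / q ^ (r * (n%:Z - j%:Z)).

Lemma CfS n j : Cf n.+1 j.+1 = Cf n j.
Proof.
rewrite /Cf subSS.
rewrite (_ : r * (2 * (n.+1)%:Z - 2 * (j.+1)%:Z + c - 1) + s = r * (2 * n%:Z - 2 * j%:Z + c - 1) + s); last by rewrite !intS; ring.
by rewrite (_ : r * ((n.+1)%:Z - (j.+1)%:Z) = r * (n%:Z - j%:Z)) //; rewrite !intS; ring.
Qed.

Lemma HS n x :
  \sum_(j < n.+1) Cf n.+1 j * gbinom (x + j%:Z - c)%:~R j
  - \sum_(j < n.+1) Cf n.+1 j * gbinom (x - 1 + j%:Z - c)%:~R j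
  = \sum_(j < n) Cf n j * gbinom (x + j%:Z - c)%:~R j.
Proof.
rewrite !big_ord_recl /= !gbinom0 opprD addrACA subrr add0r -sumrB.
apply: eq_bigr => i _; rewrite /bump /= add1n CfS -mulrBr; congr (_ * _).
rewrite (_ : x + (i.+1)%:Z - c = (x + i%:Z - c) + 1); last by rewrite intS; ring.
rewrite (_ : x - 1 + (i.+1)%:Z - c = (x + i%:Z - c)); last by rewrite intS; ring.
by rewrite intrD pascal.
Qed.

Lemma HT n x :
  (-1) ^+ n.+1 * W a b p q (r * (x + 2 * (n.+1)%:Z) + s) / (q ^ (r * (n.+1)%:Z) * V p q r ^ x)
  - (-1) ^+ n.+1 * W a b p q (r * (x - 1 + 2 * (n.+1)%:Z) + s) / (q ^ (r * (n.+1)%:Z) * V p q r ^ (x - 1))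
  = (-1) ^+ n * W a b p q (r * (x + 2 * n%:Z) + s) / (q ^ (r * n%:Z) * V p q r ^ x).
Proof.
set M := r * (x + 2 * n%:Z + 1) + s.
rewrite (_ : r * (x + 2 * (n.+1)%:Z) + s = M + r); last by rewrite /M intS; ring.
rewrite (_ : r * (x - 1 + 2 * (n.+1)%:Z) + s = M); last by rewrite /M intS; ring.
rewrite (_ : r * (x + 2 * n%:Z) + s = M - r); last by rewrite /M; ring.
rewrite (_ : r * (n.+1)%:Z = r * n%:Z + r); last by rewrite intS; ring.
rewrite expfzDr //.
have eV : V p q r ^ x = V p q r ^ (x - 1) * V p q r.
  by rewrite -[X in _ * X]expr1z -expfzDr // subrK.
rewrite eV.
have key := Vid a b p q hq M r.
have h1 := expfz_neq0 (r * n%:Z) hq.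
have h2 := expfz_neq0 r hq.
have h3 := expfz_neq0 (x - 1) hV.
move: key h1 h2 h3.
move: (W a b p q (M + r)) (W a b p q M) (W a b p q (M - r)) (q ^ (r * n%:Z)) (q ^ r) (V p q r ^ (x - 1)) => w1 w0 wm Q1 Q2 V1 key h1 h2 h3.
have -> : w1 = V p q r * w0 - Q2 * wm by rewrite -key addrK.
rewrite exprS.
by field; rewrite h1 h2 h3 hV.
Qed.

Lemma stepB n x : Rn n.+1 x - Rn n.+1 (x - 1) = Rn n x.
Proof.
rewrite /Rn.
have := HS n x; have := HT n x; rewrite /Cf => eT eS.
rewrite -eT -eS; ring.
Qed.

End Main.

Lemma nested_R (a b p q : CC) (r s c : int) (hq : q != 0) (hV : V p q r != 0) n x :
  nested (fun k : int => W a b p q (r * k + s) / V p q r ^ k) c n x = Rn a b p q r s c n x.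
Proof.
elim: n x => [|n IH] x; first by rewrite stepA.
rewrite /= (@gsum_tele _ (Rn a b p q r s c n.+1)).
- by rewrite stepC // subr0.
- by move=> k; rewrite IH stepB.
Qed.

Theorem theorem3 (a b p q : CC) (hp : p != 0) (hq : q != 0)
  (r s c an : int) (n : nat) (hn : (0 < n)%N) (hV : V p q r != 0) :
  nested (fun k : int => W a b p q (r * k + s) / V p q r ^ k) c n an =
  (-1) ^+ n * W a b p q (r * (an + 2 * n%:Z) + s) / (q ^ (r * n%:Z) * V p q r ^ an)
  - (V p q r ^ (c - 1))^-1 *
    \sum_(j < n) (-1) ^+ (n - j) * W a b p q (r * (2 * n%:Z - 2 * j%:Z + c - 1) + s)
                 / q ^ (r * (n%:Z - j%:Z)) * gbinom (an + j%:Z - c)%:~R j.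
Proof. exact: nested_R. Qed.
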